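(* Let $S$ be a polynomial ring over a field, $t$ a positive integer, $I\subseteq S$ an ideal and $\sigma$ a term order such that $\operatorname{in}_\sigma(I)$ is a squarefree monomial ideal (so that $I$ is radical and $I=\bigcap_{\mathfrak p\in\operatorname{Min}(I)}\mathfrak p$). Suppose that: (a) $\operatorname{in}_\sigma(\mathfrak p)$ is a squarefree monomial ideal for each $\mathfrak p\in\operatorname{Min}(I)$; (b) $(\operatorname{in}_\sigma(I))^{(t)}=(\operatorname{in}_\sigma(I))^t$; (c) $\operatorname{in}_\sigma(\mathfrak p^{(t)})=(\operatorname{in}_\sigma(\mathfrak p))^{(t)}$ for each $\mathfrak p\in\operatorname{Min}(I)$; (d) $\operatorname{in}_\sigma(I)=\bigcap_{\mathfrak p\in\operatorname{Min}(I)}\operatorname{in}_\sigma(\mathfrak p)$. Then $I^{(t)}=I^t$.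
   Context: $\operatorname{Min}(I)$ is the set of minimal primes of $I$; $I^{(t)}=\bigcap_{\mathfrak p\in\operatorname{Ass}(I)}(I^tS_{\mathfrak p}\cap S)$ is the $t$-th symbolic power; $\operatorname{in}_\sigma$ denotes the initial ideal. *)

(* Defs.v *)
From HB Require Import structures.
From mathcomp Require Import all_boot all_order all_algebra.
From mathcomp Require Import mpoly.
Set Implicit Arguments.
Unset Strict Implicit.
Unset Printing Implicit Defensive.
Import GRing.Theory.
Local Open Scope ring_scope.

Section Ideals.
Variable R : comNzRingType.

Definition subI (A B : R -> Prop) : Prop := forall x, A x -> B x.
Definition eqI (A B : R -> Prop) : Prop := forall x, A x <-> B x.

Definition is_ideal (I : R -> Prop) : Prop :=
  [/\ I 0, (forall x y, I x -> I y -> I (x + y)) & (forall r x, I x -> I (r * x))].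

Definition is_prime (P : R -> Prop) : Prop :=
  [/\ is_ideal P, ~ P 1 & (forall x y, P (x * y) -> P x \/ P y)].

Definition gen_ideal (G : R -> Prop) : R -> Prop := fun x =>
  exists k (r g : 'I_k -> R), (forall i, G (g i)) /\ x = \sum_(i < k) r i * g i.

Definition prod_ideal (J K : R -> Prop) : R -> Prop := fun x =>
  exists k (a b : 'I_k -> R), (forall i, J (a i)) /\ (forall i, K (b i)) /\
    x = \sum_(i < k) a i * b i.

Fixpoint pow_ideal (I : R -> Prop) (t : nat) : R -> Prop :=
  match t with
  | 0 => fun _ => True
  | t'.+1 => prod_ideal (pow_ideal I t') I
  end.

Definition colon (I : R -> Prop) (f : R) : R -> Prop := fun x => I (x * f).

Definition Ass (I : R -> Prop) (P : R -> Prop) : Prop :=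
  is_prime P /\ exists f, eqI P (colon I f).

Definition Min (I : R -> Prop) (P : R -> Prop) : Prop :=
  [/\ is_prime P, subI I P &
      (forall Q, is_prime Q -> subI I Q -> subI Q P -> subI P Q)].

(* I^t S_p ∩ S = { f | exists s ∉ p, s f ∈ I^t } *)
Definition loc_contr (J P : R -> Prop) : R -> Prop := fun x =>
  exists s, ~ P s /\ J (s * x).

Definition symb_pow (I : R -> Prop) (t : nat) : R -> Prop := fun x =>
  forall P, Ass I P -> loc_contr (pow_ideal I t) P x.

End Ideals.

Section TermOrder.
Variables (n : nat) (F : fieldType).

Definition term_order (le : rel 'X_{1..n}) : Prop :=
  [/\ reflexive le, antisymmetric le, transitive le & total le] /\
  (forall m, le 0%MM m) /\
  (forall m1 m2 m, le m1 m2 -> le (m1 + m)%MM (m2 + m)%MM).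

(* m is the leading (initial) monomial of f w.r.t. le (forces f != 0) *)
Definition is_lead (le : rel 'X_{1..n}) (f : {mpoly F[n]}) (m : 'X_{1..n}) :=
  m \in msupp f /\ forall m', m' \in msupp f -> le m' m.

Definition init_ideal (le : rel 'X_{1..n}) (I : {mpoly F[n]} -> Prop) :
    {mpoly F[n]} -> Prop :=
  gen_ideal (fun g => exists f m, I f /\ is_lead le f m /\ g = 'X_[m]).

Definition squarefree_mon (m : 'X_{1..n}) : Prop := forall i, (m i <= 1)%N.

Definition sqfree_monomial_ideal (J : {mpoly F[n]} -> Prop) : Prop :=
  exists G : 'X_{1..n} -> Prop, (forall m, G m -> squarefree_mon m) /\
    eqI J (gen_ideal (fun g => exists m, G m /\ g = 'X_[m])).

End TermOrder.

(* Main.v *)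
From HB Require Import structures.
From mathcomp Require Import all_boot all_order all_algebra.
From mathcomp Require Import mpoly.
From mathcomp Require Import ring zify.
From Stdlib Require Import Classical ClassicalEpsilon.
Require Import Defs.
Set Implicit Arguments.
Unset Strict Implicit.
Unset Printing Implicit Defensive.
Import GRing.Theory.

Module Dick.

Lemma tail_min (a : nat -> nat) k : exists j, k <= j /\ forall j', k <= j' -> a j <= a j'.
Proof.
suff H : forall v, (exists j, k <= j /\ a j <= v) ->
    exists j, k <= j /\ forall j', k <= j' -> a j <= a j'.
  by apply: (H (a k)); exists k.
elim=> [|v IH] [j [hj hv]].
  by exists j; split => // j' _; move: hv; rewrite leqn0 => /eqP ->.
case: (classic (exists j, k <= j /\ a j <= v)) => [|hn]; first exact: IH.
exists j; split => // j' hj'; apply: (leq_trans hv).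
by rewrite leqNgt; apply/negP => h; apply: hn; exists j'; split.
Qed.

Lemma mono_subseq (a : nat -> nat) : exists psi : nat -> nat,
  (forall i, psi i < psi i.+1) /\ (forall i, a (psi i) <= a (psi i.+1)).
Proof.
have g : forall k, {j | k <= j /\ forall j', k <= j' -> a j <= a j'}.
  by move=> k; apply: constructive_indefinite_description; apply: tail_min.
pose psi := fix psi i := match i with 0 => sval (g 0) | i'.+1 => sval (g (psi i').+1) end.
have hlt : forall i, psi i < psi i.+1.
  by move=> i /=; case: (svalP (g (psi i).+1)).
have hmin : forall i, exists k, k <= psi i /\ forall j', k <= j' -> a (psi i) <= a j'.
  case=> [|i] /=; first by exists 0; apply: (svalP (g 0)).
  by exists (psi i).+1; apply: (svalP (g (psi i).+1)).
exists psi; split => // i.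
have [k [hk hm]] := hmin i; apply: hm.
exact: (leq_trans hk (ltnW (hlt i))).
Qed.

Lemma incr_mono (psi : nat -> nat) : (forall i, psi i < psi i.+1) ->
  forall i j, i < j -> psi i < psi j.
Proof.
move=> h i j; elim: j => [//|j IH]; rewrite ltnS leq_eqVlt => /orP [/eqP ->|/IH hij].
  exact: h.
exact: ltn_trans hij (h j).
Qed.

Lemma chain_mono (b : nat -> nat) : (forall i, b i <= b i.+1) ->
  forall i j, i <= j -> b i <= b j.
Proof.
move=> h i j; elim: j => [|j IH]; first by rewrite leqn0 => /eqP ->.
rewrite leq_eqVlt => /orP [/eqP ->//|]; rewrite ltnS => /IH hij.
exact: leq_trans hij (h j).
Qed.

Lemma dickson_aux n (s : nat -> 'X_{1..n}) (l : seq 'I_n) : exists psi : nat -> nat,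
  (forall i, psi i < psi i.+1) /\
  forall j, j \in l -> forall i, s (psi i) j <= s (psi i.+1) j.
Proof.
elim: l => [|j l [psi [hpsi hl]]]; first by exists id.
have [phi [hphi hj]] := mono_subseq (fun i => s (psi i) j).
exists (fun i => psi (phi i)); split.
  by move=> i; apply: incr_mono.
move=> j'; rewrite inE => /orP [/eqP -> //|/hl h] i.
apply: (chain_mono (b := fun k => s (psi k) j')) => //.
exact: ltnW (hphi i).
Qed.

Lemma dickson n (s : nat -> 'X_{1..n}) : exists i j, i < j /\ (s i <= s j)%MM.
Proof.
have [psi [hpsi hl]] := dickson_aux s (enum 'I_n).
exists (psi 0), (psi 1); split => //.
by apply/mnm_lepP => i; apply: hl; rewrite mem_enum.
Qed.

End Dick.
Import Dick.

Local Open Scope ring_scope.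


Section IdealFacts.
Variable R : comNzRingType.
Implicit Types (I J K P Q G : R -> Prop).

Definition cat_fun (A : Type) k1 k2 (f1 : 'I_k1 -> A) (f2 : 'I_k2 -> A) :
  'I_(k1 + k2) -> A := fun i => match split i with inl j => f1 j | inr j => f2 j end.

Lemma cat_fun_l (A : Type) k1 k2 (f1 : 'I_k1 -> A) (f2 : 'I_k2 -> A) j :
  cat_fun f1 f2 (lshift k2 j) = f1 j.
Proof. by rewrite /cat_fun (unsplitK (inl _ j)). Qed.

Lemma cat_fun_r (A : Type) k1 k2 (f1 : 'I_k1 -> A) (f2 : 'I_k2 -> A) j :
  cat_fun f1 f2 (rshift k1 j) = f2 j.
Proof. by rewrite /cat_fun (unsplitK (inr _ j)). Qed.

Lemma cat_fun_P (A : Type) (Pr : A -> Prop) k1 k2 (f1 : 'I_k1 -> A) (f2 : 'I_k2 -> A) :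
  (forall i, Pr (f1 i)) -> (forall i, Pr (f2 i)) -> forall i, Pr (cat_fun f1 f2 i).
Proof. by move=> h1 h2 i; rewrite /cat_fun; case: split. Qed.

Lemma sum_cat k1 k2 (f1 g1 : 'I_k1 -> R) (f2 g2 : 'I_k2 -> R) :
  \sum_(i < k1 + k2) cat_fun f1 f2 i * cat_fun g1 g2 i =
  \sum_(i < k1) f1 i * g1 i + \sum_(i < k2) f2 i * g2 i.
Proof.
rewrite big_split_ord; congr (_ + _); apply: eq_bigr => i _.
  by rewrite !cat_fun_l.
by rewrite !cat_fun_r.
Qed.

Lemma idealB I x y : is_ideal I -> I x -> I y -> I (x - y).
Proof.
case=> _ hD hM hx hy; apply: hD => //.
by rewrite -mulN1r; apply: hM.
Qed.

Lemma idealMr I x r : is_ideal I -> I x -> I (x * r).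
Proof. by case=> _ _ hM hx; rewrite mulrC; apply: hM. Qed.

Lemma ideal_sum I k (F : 'I_k -> R) : is_ideal I -> (forall i, I (F i)) ->
  I (\sum_(i < k) F i).
Proof.
move=> [h0 hD hM] hF; elim/big_ind: _ => //.
Qed.

Lemma ideal_sum_seq I (T : Type) (s : seq T) (F : T -> R) : is_ideal I ->
  (forall i, I (F i)) -> I (\sum_(i <- s) F i).
Proof. move=> [h0 hD hM] hF; elim/big_ind: _ => //. Qed.

Lemma ideal_eqI I J : eqI I J -> is_ideal I -> is_ideal J.
Proof.
move=> e [h0 hD hM]; split; first by apply/e.
  by move=> x y /e hx /e hy; apply/e; apply: hD.
by move=> r x /e hx; apply/e; apply: hM.
Qed.

Lemma gen_ideal_ideal G : is_ideal (gen_ideal G).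
Proof.
split.
- by exists 0%N, (fun _ => 0), (fun _ => 0); split; [case|rewrite big_ord0].
- move=> x y [k1 [r1 [g1 [h1 ->]]]] [k2 [r2 [g2 [h2 ->]]]].
  exists (k1 + k2)%N, (cat_fun r1 r2), (cat_fun g1 g2); split.
    exact: cat_fun_P.
  by rewrite sum_cat.
- move=> r x [k [r1 [g1 [h1 ->]]]].
  exists k, (fun i => r * r1 i), g1; split => //.
  by rewrite mulr_sumr; apply: eq_bigr => i _; rewrite mulrA.
Qed.

Lemma gen_ideal_gen G g : G g -> gen_ideal G g.
Proof.
move=> hg; exists 1%N, (fun _ => 1), (fun _ => g); split => //.
by rewrite big_ord1 mul1r.
Qed.

Lemma gen_ideal_min G J : is_ideal J -> (forall g, G g -> J g) ->
  subI (gen_ideal G) J.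
Proof.
move=> hJ hG x [k [r [g [hg ->]]]]; apply: ideal_sum => // i.
by case: hJ => _ _ hM; apply: hM; apply: hG.
Qed.

Lemma gen_ideal_mono (G1 G2 : R -> Prop) : (forall g, G1 g -> G2 g) ->
  subI (gen_ideal G1) (gen_ideal G2).
Proof.
move=> h; apply: gen_ideal_min; first exact: gen_ideal_ideal.
by move=> g /h; apply: gen_ideal_gen.
Qed.

Lemma prod_ideal_ideal J K : is_ideal J -> is_ideal (prod_ideal J K).
Proof.
move=> [hJ0 hJD hJM]; split.
- by exists 0%N, (fun _ => 0), (fun _ => 0); split; [case|split; [case|rewrite big_ord0]].
- move=> x y [k1 [a1 [b1 [ha1 [hb1 ->]]]]] [k2 [a2 [b2 [ha2 [hb2 ->]]]]].
  exists (k1 + k2)%N, (cat_fun a1 a2), (cat_fun b1 b2); split.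
    exact: cat_fun_P.
  split; first exact: cat_fun_P.
  by rewrite sum_cat.
- move=> r x [k [a [b [ha [hb ->]]]]].
  exists k, (fun i => r * a i), b; split; first by move=> i; apply: hJM.
  split => //.
  by rewrite mulr_sumr; apply: eq_bigr => i _; rewrite mulrA.
Qed.

Lemma prod_ideal_mul J K a b : J a -> K b -> prod_ideal J K (a * b).
Proof.
move=> ha hb; exists 1%N, (fun _ => a), (fun _ => b).
by split => //; split => //; rewrite big_ord1.
Qed.

Lemma prod_ideal_mono J J' K K' : subI J J' -> subI K K' ->
  subI (prod_ideal J K) (prod_ideal J' K').
Proof.
move=> hJ hK x [k [a [b [ha [hb ->]]]]].
by exists k, a, b; split => [i|]; [apply: hJ|split => // i; apply: hK].
Qed.

Lemma pow_ideal_ideal I t : is_ideal (pow_ideal I t).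
Proof.
elim: t => [|t IH] /=; first by split.
exact: prod_ideal_ideal.
Qed.

Lemma pow_ideal_mono I J t : subI I J -> subI (pow_ideal I t) (pow_ideal J t).
Proof.
move=> h; elim: t => [|t IH] //=.
exact: prod_ideal_mono.
Qed.

Lemma pow_ideal_scale J J' u k z : (forall y, J' y -> J (u * y)) ->
  pow_ideal J' k z -> pow_ideal J k (u ^+ k * z).
Proof.
move=> hu; elim: k z => [|k IH] z //= [m [a [b [ha [hb ->]]]]].
exists m, (fun i => u ^+ k * a i), (fun i => u * b i); split.
  by move=> i; apply: IH.
split; first by move=> i; apply: hu.
rewrite mulr_sumr; apply: eq_bigr => i _; rewrite exprSr.
by rewrite mulrACA.
Qed.

Lemma prime_notM P a b : is_prime P -> ~ P a -> ~ P b -> ~ P (a * b).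
Proof. by move=> [_ _ hP] ha hb /hP []. Qed.

Lemma prime_notX P a k : is_prime P -> ~ P a -> ~ P (a ^+ k).
Proof.
move=> hP ha; elim: k => [|k IH]; first by rewrite expr0; case: hP.
by rewrite exprS; apply: prime_notM.
Qed.



Lemma loc_contr_ideal J P : is_ideal J -> is_prime P -> is_ideal (loc_contr J P).
Proof.
move=> [hJ0 hJD hJM] hP; split.
- by exists 1; split; [case: hP|rewrite mulr0].
- move=> x y [s1 [hs1 h1]] [s2 [hs2 h2]].
  exists (s1 * s2); split; first exact: prime_notM.
  rewrite mulrDr; apply: hJD.
    by rewrite (mulrC s1) -mulrA; apply: hJM.
  by rewrite -mulrA; apply: hJM.
- move=> r x [s [hs h]]; exists s; split => //.
  by rewrite mulrCA; apply: hJM.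
Qed.

Lemma loc_contr_eqI J P Q x : eqI P Q -> loc_contr J P x -> loc_contr J Q x.
Proof. by move=> e [s [hs h]]; exists s; split => // /e. Qed.

Lemma loc_contr_mono J J' P x : subI J J' -> loc_contr J P x -> loc_contr J' P x.
Proof. by move=> e [s [hs h]]; exists s; split => //; apply: e. Qed.

Lemma symb_pow_ideal I t : is_ideal I -> is_ideal (symb_pow I t).
Proof.
move=> hI; split.
- move=> P [hP _]; have := loc_contr_ideal (pow_ideal_ideal I t) hP.
  by case.
- move=> x y hx hy P hA; have [hP _] := hA.
  by case: (loc_contr_ideal (pow_ideal_ideal I t) hP) => _ hD _; apply: hD;
    [apply: hx|apply: hy].
- move=> r x hx P hA; have [hP _] := hA.
  by case: (loc_contr_ideal (pow_ideal_ideal I t) hP) => _ _ hM; apply: hM;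
    apply: hx.
Qed.

Lemma pow_sub_symb I t : subI (pow_ideal I t) (symb_pow I t).
Proof.
move=> x hx P [hP _]; exists 1; split; first by case: hP.
by rewrite mul1r.
Qed.

Lemma colon_ideal I f : is_ideal I -> is_ideal (colon I f).
Proof.
move=> [h0 hD hM]; split; rewrite /colon.
- by rewrite mul0r.
- by move=> x y hx hy; rewrite mulrDl; apply: hD.
- by move=> r x hx; rewrite -mulrA; apply: hM.
Qed.

Lemma Ass_prime P Q : is_prime P -> Ass P Q -> eqI Q P.
Proof.
move=> hP [hQ [f e]].
have nf : ~ P f.
  move=> pf; case: hQ => _ h1 _; apply: h1; apply/e.
  by rewrite /colon mul1r.
move=> x; split => [/e hx | hx].
  by case: hP => _ _ hp; case: (hp _ _ hx).
apply/e; rewrite /colon; case: hP => [[_ _ hM] _ _].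
by rewrite mulrC; apply: hM.
Qed.

Lemma symb_pow_prime P t x : is_prime P -> symb_pow P t x ->
  loc_contr (pow_ideal P t) P x.
Proof.
move=> hP h; apply: h; split => //; exists 1 => y.
by rewrite /colon mulr1.
Qed.

End IdealFacts.



Section Noeth.
Variable R : comNzRingType.
Implicit Types (I J K P Q : R -> Prop).

Definition ACC_ideals := forall c : nat -> R -> Prop, (forall k, is_ideal (c k)) ->
  (forall k, subI (c k) (c k.+1)) -> exists k, subI (c k.+1) (c k).

Lemma maximal_principle (Fam : (R -> Prop) -> Prop) : ACC_ideals ->
  (forall J, Fam J -> is_ideal J) -> (exists J, Fam J) ->
  exists J, Fam J /\ forall J', Fam J' -> subI J J' -> subI J' J.
Proof.
move=> acc hI [J0 hJ0]; apply: NNPP => hn.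
have step : forall x : {J | Fam J},
    {y : {J | Fam J} | subI (sval x) (sval y) /\ ~ subI (sval y) (sval x)}.
  move=> [J hJ]; apply: constructive_indefinite_description.
  apply: NNPP => hn2; apply: hn; exists J; split => // J' hJ' hs.
  apply: NNPP => hns; apply: hn2; by exists (exist _ J' hJ').
pose f x := sval (step x).
pose c k := sval (iter k f (exist _ J0 hJ0)).
have [k hk] := acc c (fun k => hI _ (svalP (iter k f _)))
  (fun k => proj1 (svalP (step (iter k f (exist _ J0 hJ0))))).
by have := proj2 (svalP (step (iter k f (exist _ J0 hJ0)))).
Qed.

Lemma prime_X P a k : is_prime P -> P (a ^+ k) -> P a.
Proof.
move=> hP; elim: k => [|k IH]; first by rewrite expr0 => h; case: hP.
by rewrite exprS => h; case: hP => _ _ /(_ _ _ h) [] // /IH.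
Qed.

Lemma prime_avoid I (T : R -> Prop) : ACC_ideals -> is_ideal I ->
  (forall a b, T a -> T b -> T (a * b)) -> (exists x, T x) ->
  (forall x, T x -> ~ I x) ->
  exists Q, [/\ is_prime Q, subI I Q & forall x, T x -> ~ Q x].
Proof.
move=> acc hI hT [x0 hx0] hdis.
pose Fam J := [/\ is_ideal J, subI I J & forall x, T x -> ~ J x].
have [Q [[hQi hIQ hQT] hmax]] := @maximal_principle Fam acc
  (fun J h => let: And3 a _ _ := h in a) (ex_intro _ I (And3 hI (fun _ h => h) hdis)).
exists Q; split => //; split => //.
  move=> hQ1; apply: (hQT x0 hx0); rewrite -[x0]mulr1.
  by case: hQi => _ _ hM; apply: hM.
move=> a b hab; apply: NNPP => /not_or_and [ha hb].
pose Qa c z := exists q r, Q q /\ z = q + r * c.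
have Qa_ideal c : is_ideal (Qa c).
  case: hQi => h0 hD hM; split.
  - by exists 0, 0; split => //; rewrite mul0r addr0.
  - move=> x y [q1 [r1 [h1 ->]]] [q2 [r2 [h2 ->]]].
    exists (q1 + q2), (r1 + r2); split; first exact: hD.
    by rewrite mulrDl addrACA.
  - move=> r x [q1 [r1 [h1 ->]]]; exists (r * q1), (r * r1); split; first exact: hM.
    by rewrite mulrDr mulrA.
have QsubQa c : subI Q (Qa c) by move=> z hz; exists z, 0; rewrite mul0r addr0.
have Qac c : Qa c c by exists 0, 1; split; [case: hQi|rewrite add0r mul1r].
have meets c : ~ Q c -> exists t, T t /\ Qa c t.
  move=> hc; apply: NNPP => hn; apply: hc; apply: (hmax (Qa c)) => //.
  split => //; first by move=> z /hIQ /QsubQa.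
  by move=> z hz hz'; apply: hn; exists z.
have [t1 [ht1 [q1 [r1 [hq1 e1]]]]] := meets a ha.
have [t2 [ht2 [q2 [r2 [hq2 e2]]]]] := meets b hb.
apply: (hQT _ (hT _ _ ht1 ht2)).
have -> : t1 * t2 = q1 * t2 + r1 * (q2 * a) + r1 * r2 * (a * b).
  by rewrite e1 e2; ring.
case: hQi => h0 hD hM; apply: (hD); first apply: (hD).
- by apply: idealMr.
- by apply: (hM); rewrite mulrC; apply: hM.
- by apply: hM.
Qed.

Lemma min_local I p x : ACC_ideals -> is_ideal I ->
  (forall y, (forall Q, Min I Q -> Q y) -> I y) -> Min I p -> p x ->
  exists s, ~ p s /\ I (s * x).
Proof.
move=> acc hI hrad hp px; apply: NNPP => hn.
have [hpP hIp hpmin] := hp.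
pose T z := exists s k, ~ p s /\ z = s * x ^+ k.
have hT a b : T a -> T b -> T (a * b).
  move=> [s1 [k1 [h1 ->]]] [s2 [k2 [h2 ->]]]; exists (s1 * s2), (k1 + k2)%N.
  by split; [apply: prime_notM|rewrite exprD; ring].
have hT1 : exists z, T z by exists 1, 1, 0%N; split; [case: hpP|rewrite mulr1].
have hdis z : T z -> ~ I z.
  move=> [s [k [hs ->]]] hz.
  case: k hz => [|k] hz.
    by apply: hs; apply: hIp; move: hz; rewrite expr0 mulr1.
  apply: hn; exists s; split => //; apply: hrad => Q hQ.
  have [hQP hIQ _] := hQ.
  apply: (@prime_X Q _ k.+1) => //; apply: hIQ.
  rewrite exprMn exprS -mulrA mulrCA.
  by case: hI hz => _ _ hM hz; apply: hM.
have [Q [hQ hIQ hQT]] := prime_avoid acc hI hT hT1 hdis.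
have hQp : subI Q p.
  move=> y hy; apply: NNPP => hpy; apply: (hQT y) => //.
  by exists y, 0%N; split => //; rewrite expr0 mulr1.
have := hpmin Q hQ hIQ hQp _ px.
by apply: hQT; exists 1, 1%N; split; [case: hpP|rewrite mul1r expr1].
Qed.

Lemma min_ass I p : ACC_ideals -> is_ideal I ->
  (forall y, (forall Q, Min I Q -> Q y) -> I y) -> Min I p -> Ass I p.
Proof.
move=> acc hI hrad hp; have [hpP hIp hpmin] := hp.
pose Fam J := exists g, ~ p g /\ J = colon I g.
have hFam : forall J, Fam J -> is_ideal J.
  by move=> J [g [_ ->]]; apply: colon_ideal.
have hne : exists J, Fam J.
  by exists (colon I 1), 1; split => //; case: hpP.
have [J [[f [hf ->]] hmax]] := @maximal_principle Fam acc hFam hne.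
split => //; exists f => x; split => hx; last first.
  have : p (x * f) by apply: hIp.
  by case: hpP => _ _ /(_ _ _ (hIp _ hx)) [] // /hf.
have [s [hs hsx]] := min_local acc hI hrad hp hx.
have e := hmax (colon I (f * s)) (ex_intro _ (f * s) (conj (prime_notM hpP hf hs) erefl)).
apply: e.
  by move=> z; rewrite /colon => hz; rewrite mulrA; apply: idealMr.
rewrite /colon mulrA mulrAC (mulrC x); exact: idealMr.
Qed.

End Noeth.



Section TO.
Variables (n : nat) (F : fieldType) (le : rel 'X_{1..n}).
Hypothesis hto : term_order le.

Lemma le_refl m : le m m.
Proof. by case: hto => [[h _ _ _] _]. Qed.
Lemma le_anti m1 m2 : le m1 m2 -> le m2 m1 -> m1 = m2.
Proof. by case: hto => [[_ h _ _] _] a b; apply: h; rewrite a b. Qed.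
Lemma le_trans m2 m1 m3 : le m1 m2 -> le m2 m3 -> le m1 m3.
Proof. by case: hto => [[_ _ h _] _]; apply: h. Qed.
Lemma le_total m1 m2 : le m1 m2 || le m2 m1.
Proof. by case: hto => [[_ _ _ h] _]. Qed.
Lemma le0 m : le 0%MM m.
Proof. by case: hto => [_ [h _]]. Qed.
Lemma le_addr m1 m2 m : le m1 m2 -> le (m1 + m)%MM (m2 + m)%MM.
Proof. by case: hto => [_ [_ h]]; apply: h. Qed.
Lemma le_addl m1 m2 m : le m1 m2 -> le (m + m1)%MM (m + m2)%MM.
Proof. by rewrite ![(m + _)%MM]addmC; apply: le_addr. Qed.
Lemma le_add m1 m2 m3 m4 : le m1 m2 -> le m3 m4 -> le (m1 + m3)%MM (m2 + m4)%MM.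
Proof. by move=> h1 h2; apply: (le_trans (le_addr m3 h1)); apply: le_addl. Qed.

Lemma lem_le m1 m2 : (m1 <= m2)%MM -> le m1 m2.
Proof.
move=> h; rewrite -(submK h) -{1}(add0m m1); apply: le_addr; exact: le0.
Qed.

Lemma le_add_strict m1 m2 a b : le m1 a -> m1 != a -> le m2 b ->
  (m1 + m2)%MM != (a + b)%MM.
Proof.
move=> h1 ne h2; apply/eqP => e.
have l1 : le (m1 + m2)%MM (m1 + b)%MM by apply: le_addl.
have l2 : le (m1 + b)%MM (a + b)%MM by apply: le_addr.
have : (m1 + b)%MM = (a + b)%MM by apply: le_anti => //; rewrite -e.
by move/addIm => e'; rewrite e' eqxx in ne.
Qed.

Definition ltT m1 m2 := le m1 m2 && (m1 != m2).

Lemma ltT_trans m2 m1 m3 : ltT m1 m2 -> ltT m2 m3 -> ltT m1 m3.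
Proof.
move=> /andP [h1 n1] /andP [h2 n2]; apply/andP; split; first exact: le_trans h2.
apply/eqP => e; move: h2; rewrite -e => h2.
by have := le_anti h1 h2; move/eqP; rewrite (negbTE n1).
Qed.

Lemma ltT_wf : well_founded ltT.
Proof.
move=> m0; apply: NNPP => hn.
have step : forall x : {m | ~ Acc ltT m}, {y : {m | ~ Acc ltT m} | ltT (sval y) (sval x)}.
  move=> [m hm]; apply: constructive_indefinite_description.
  apply: NNPP => hn2; apply: (hm); constructor => y hy; apply: NNPP => hy'.
  by apply: hn2; exists (exist _ y hy').
pose s k := sval (iter k (fun x => sval (step x)) (exist _ m0 hn)).
have hs k : ltT (s k.+1) (s k) by rewrite /s /=; apply: (svalP (step _)).
have hsj : forall i j, (i < j)%N -> ltT (s j) (s i).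
  move=> i j; elim: j => [//|j IH]; rewrite ltnS leq_eqVlt => /orP [/eqP ->|/IH h].
    exact: hs.
  exact: ltT_trans h.
have [i [j [hij hle]]] := dickson s.
have /andP [h1 h2] := hsj _ _ hij.
by move: h2; rewrite (le_anti h1 (lem_le hle)) eqxx.
Qed.

Implicit Types (f g h : {mpoly F[n]}).

Lemma seq_max (s : seq 'X_{1..n}) : s != [::] ->
  exists2 m, m \in s & forall m', m' \in s -> le m' m.
Proof.
elim: s => [//|x s IH] _.
case: (eqVneq s [::]) => [->|/IH [m hm hmax]].
  by exists x => [|m']; rewrite ?inE // => /eqP ->; apply: le_refl.
case/orP: (le_total x m) => hxm.
  exists m; first by rewrite inE hm orbT.
  by move=> m'; rewrite inE => /orP [/eqP ->|/hmax].
exists x; first by rewrite inE eqxx.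
move=> m'; rewrite inE => /orP [/eqP ->|/hmax h]; first exact: le_refl.
exact: le_trans hxm.
Qed.

Lemma lead_ex f : f != 0 -> exists m, is_lead le f m.
Proof.
move=> nz; have : msupp f != [::] by rewrite msupp_eq0.
by case/seq_max => m hm hmax; exists m; split.
Qed.

Lemma lead_uniq f m1 m2 : is_lead le f m1 -> is_lead le f m2 -> m1 = m2.
Proof. by move=> [h1 h1'] [h2 h2']; apply: le_anti; [apply: h2'|apply: h1']. Qed.

Lemma lead_neq0 f m : is_lead le f m -> f != 0.
Proof. by move=> [h _]; apply/eqP => e; move: h; rewrite e msupp0. Qed.

Lemma lead_coef_neq0 f m : is_lead le f m -> f@_m != 0.
Proof. by move=> [h _]; rewrite -mcoeff_msupp. Qed.

Lemma lead_X m : is_lead le ('X_[m] : {mpoly F[n]}) m.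
Proof.
split; first by rewrite msuppX inE.
by move=> m'; rewrite msuppX inE => /eqP ->; apply: le_refl.
Qed.

Lemma lead_MX f m d : is_lead le f m -> is_lead le (f * 'X_[d]) (d + m)%MM.
Proof.
move=> [hm hmax]; have pe := msuppMX f d; split.
  by rewrite (perm_mem pe); apply/mapP; exists m.
move=> m'; rewrite (perm_mem pe) => /mapP [m'' h ->].
by apply: le_addl; apply: hmax.
Qed.

Lemma supp_le_prod f g a b m : (forall m, m \in msupp f -> le m a) ->
  (forall m, m \in msupp g -> le m b) -> m \in msupp (f * g) ->
  le m (a + b)%MM.
Proof.
move=> hf hg /msuppM_le /allpairsP [[m1 m2] [h1 h2 ->]] /=.
by apply: le_add; [apply: hf|apply: hg].
Qed.

Lemma lead_M f g a b : is_lead le f a -> is_lead le g b -> is_lead le (f * g) (a + b)%MM.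
Proof.
move=> hfa hgb; have [ha hfmax] := hfa; have [hb hgmax] := hgb.
split; last by move=> m; apply: supp_le_prod.
pose f1 := f - f@_a *: 'X_[a].
have ef : f = f@_a *: 'X_[a] + f1 by rewrite /f1 addrC subrK.
have hf1 m : m \in msupp f1 -> le m a /\ m != a.
  rewrite mcoeff_msupp /f1 mcoeffB mcoeffZ mcoeffX.
  case: (eqVneq a m) => [->|ne]; first by rewrite mulr1 subrr eqxx.
  rewrite mulr0 subr0 -mcoeff_msupp => hm; split; first exact: hfmax.
  by [].
rewrite mcoeff_msupp ef mulrDl mcoeffD -scalerAl mcoeffZ.
rewrite [('X_[a] * g)]mulrC mcoeffMX.
have -> : (f1 * g)@_(a + b)%MM = 0.
  apply: memN_msupp_eq0; apply/negP => /msuppM_le /allpairsP [[m1 m2] [h1 h2 /= e]].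
  have [l1 n1] := hf1 _ h1.
  by have := le_add_strict l1 n1 (hgmax _ h2); rewrite e eqxx.
rewrite addr0 mulf_neq0 //; exact: lead_coef_neq0.
Qed.

Lemma lead_sub f g a : is_lead le f a -> is_lead le g a ->
  let h := f - (f@_a / g@_a) *: g in
  h@_a = 0 /\ forall m, m \in msupp h -> ltT m a.
Proof.
move=> [ha hfm] hgb h.
have hga := lead_coef_neq0 hgb; have [hb hgm] := hgb.
have h0 : h@_a = 0 by rewrite /h mcoeffB mcoeffZ mulfVK // subrr.
split => // m hm; apply/andP; split; last first.
  by apply/eqP => e; move: hm; rewrite e mcoeff_msupp h0 eqxx.
move: hm; rewrite mcoeff_msupp /h mcoeffB mcoeffZ.
case: (eqVneq (f@_m) 0) => [e|]; last by rewrite -mcoeff_msupp => hf _; apply: hfm.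
rewrite e sub0r oppr_eq0 mulf_eq0 negb_or => /andP [_].
by rewrite -mcoeff_msupp; apply: hgm.
Qed.

End TO.



Lemma gen_mul (R : comNzRingType) (G1 G2 J : R -> Prop) x y : is_ideal J ->
  (forall a b, G1 a -> G2 b -> J (a * b)) -> gen_ideal G1 x -> gen_ideal G2 y ->
  J (x * y).
Proof.
move=> hJ hG hx hy.
have h1 : forall b, G2 b -> subI (gen_ideal G1) (colon J b).
  move=> b hb; apply: gen_ideal_min; first exact: colon_ideal.
  by move=> a ha; apply: hG.
have h2 : subI (gen_ideal G2) (colon J x).
  apply: gen_ideal_min; first exact: colon_ideal.
  by move=> b hb; rewrite /colon mulrC; apply: h1.
by rewrite mulrC; apply: h2.
Qed.

Section G.
Variables (n : nat) (F : fieldType) (le : rel 'X_{1..n}).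
Hypothesis hto : term_order le.
Implicit Types (f g h : {mpoly F[n]}) (I J K : {mpoly F[n]} -> Prop).

Lemma groebner_eq J K : is_ideal J -> is_ideal K -> subI J K ->
  (forall f m, K f -> is_lead le f m -> exists g, J g /\ is_lead le g m) -> subI K J.
Proof.
move=> hJ hK hJK hL.
suff H : forall a f, K f -> is_lead le f a -> J f.
  move=> f hf; case: (eqVneq f 0) => [->|nz]; first by case: hJ.
  by have [a ha] := lead_ex hto nz; apply: H ha.
elim/(well_founded_induction (ltT_wf hto)) => a IH f hf hfa.
have [g [hg hga]] := hL _ _ hf hfa.
have [h0 hlt] := lead_sub hfa hga.
set c := f@_a / g@_a in h0 hlt *.
set h := f - c *: g in h0 hlt *.
have hcg : J (c *: g) by rewrite -mul_mpolyC; case: hJ => _ _; apply.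
have hh : K h by apply: idealB => //; apply: hJK.
have -> : f = h + c *: g by rewrite /h subrK.
case: (hJ) => j0 jD jM; apply: jD => //.
case: (eqVneq h 0) => [->//|nz].
have [a' ha'] := lead_ex hto nz.
apply: (IH a') => //; apply: hlt; case: ha' => + _; exact.
Qed.

Lemma acc_mpoly : @ACC_ideals {mpoly F[n]}.
Proof.
move=> c hc hinc; apply: NNPP => hn.
have hmono : forall i j, (i <= j)%N -> subI (c i) (c j).
  move=> i j; elim: j => [|j IH]; first by rewrite leqn0 => /eqP ->.
  rewrite leq_eqVlt => /orP [/eqP ->//|]; rewrite ltnS => /IH hij x /hij.
  exact: hinc.
have step : forall k, {m | exists f, c k.+1 f /\ is_lead le f m /\
                              ~ exists g, c k g /\ is_lead le g m}.
  move=> k; apply: constructive_indefinite_description.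
  apply: NNPP => hn2; apply: hn; exists k.
  apply: groebner_eq => // f m hf hfm; apply: NNPP => hn3; apply: hn2.
  by exists m, f.
pose s k := sval (step k).
have [i [j [hij hle]]] := dickson s.
case: (svalP (step i)) => f [hf [hfl _]].
case: (svalP (step j)) => _ [_ [_ hno]].
apply: hno; exists (f * 'X_[s j - s i]); split.
  by apply: idealMr => //; apply: (hmono i.+1).
have := lead_MX hto (s j - s i) hfl.
by rewrite submK.
Qed.

Lemma mon_ideal_supp (Gen : {mpoly F[n]} -> Prop) (G : 'X_{1..n} -> Prop) h :
  (forall g, Gen g -> exists m, G m /\ g = 'X_[m]) -> gen_ideal Gen h ->
  forall m, m \in msupp h -> exists m', G m' /\ (m' <= m)%MM.
Proof.
move=> hG [k [r [g [hg ->]]]] m hm; apply: NNPP => hn; move: hm.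
rewrite mcoeff_msupp raddf_sum /= big1 ?eqxx // => i _.
have [e [he ->]] := hG _ (hg i).
apply: memN_msupp_eq0; rewrite (perm_mem (msuppMX _ _)); apply/negP => /mapP [m' _ em].
by apply: hn; exists e; split => //; rewrite em lem_addr.
Qed.

Lemma init_lead I f m : I f -> is_lead le f m -> init_ideal le I 'X_[m].
Proof. by move=> hf hm; apply: gen_ideal_gen; exists f, m. Qed.

Lemma init_mon I m : is_ideal I -> init_ideal le I 'X_[m] ->
  exists f, I f /\ is_lead le f m.
Proof.
move=> hI hm.
have hG : forall g, (exists f m, I f /\ is_lead le f m /\ g = 'X_[m]) ->
    exists m, (exists f, I f /\ is_lead le f m) /\ g = 'X_[m].
  by move=> g [f [m' [hf [hl ->]]]]; exists m'; split => //; exists f.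
have hmm : m \in msupp ('X_[m] : {mpoly F[n]}) by rewrite msuppX inE.
have [m' [[f [hf hl]] hle]] := mon_ideal_supp hG hm hmm.
exists (f * 'X_[m - m']); split; first exact: idealMr.
by have := lead_MX hto (m - m') hl; rewrite submK.
Qed.

Lemma init_ideal_ideal I : is_ideal (init_ideal le I).
Proof. exact: gen_ideal_ideal. Qed.

Lemma init_mono I J : subI I J -> subI (init_ideal le I) (init_ideal le J).
Proof.
move=> h; apply: gen_ideal_mono => g [f [m [hf [hl ->]]]].
by exists f, m; split => //; apply: h.
Qed.

Lemma init_prod (A B : {mpoly F[n]} -> Prop) x y : init_ideal le A x -> init_ideal le B y ->
  init_ideal le (prod_ideal A B) (x * y).
Proof.
apply: gen_mul; first exact: init_ideal_ideal.
move=> a b [f [m [hf [hl ->]]]] [g [m' [hg [hl' ->]]]].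
rewrite -mpolyXD; apply: (init_lead (f := f * g)).
  exact: prod_ideal_mul.
exact: lead_M.
Qed.

Lemma init_pow I t : subI (pow_ideal (init_ideal le I) t) (init_ideal le (pow_ideal I t)).
Proof.
elim: t => [|t IH] /= x hx.
  rewrite -[x]mulr1 -(mpolyX0 n F).
  case: (init_ideal_ideal (fun=> True)) => _ _; apply.
  by apply: (init_lead (f := 'X_[0%MM])) => //; apply: lead_X.
case: hx => k [a [b [ha [hb ->]]]].
apply: ideal_sum; first exact: init_ideal_ideal.
by move=> i; apply: init_prod; [apply: IH|].
Qed.

Lemma sqfree_rad (M : {mpoly F[n]} -> Prop) x : sqfree_monomial_ideal M -> M (x * x) -> M x.
Proof.
case=> G [hG e] hxx.
have hM : is_ideal M.
  by apply: (ideal_eqI (I := gen_ideal _)) (gen_ideal_ideal _) => y; split => /e.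
pose D m := exists e, G e /\ (e <= m)%MM.
pose Db m : bool := if excluded_middle_informative (D m) then true else false.
have DbP m : Db m -> D m by rewrite /Db; case: excluded_middle_informative.
have DbN m : D m -> Db m by rewrite /Db; case: excluded_middle_informative.
pose x1 := \sum_(m <- msupp x | Db m) x@_m *: 'X_[m].
pose x2 := \sum_(m <- msupp x | ~~ Db m) x@_m *: 'X_[m].
have ex : x = x1 + x2 by rewrite {1}[x]mpolyE (bigID Db).
have hx1 : M x1.
  apply: (big_ind M); [by case: hM|by case: hM => _ hD _|].
  move=> m /DbP [e0 [he0 hle]].
  rewrite -mul_mpolyC -(submK hle) mpolyXD mulrA; case: (hM) => _ _; apply.
  by apply/e; apply: gen_ideal_gen; exists e0.
have hx2 : M (x2 * x2).
  have -> : x2 * x2 = x * x - x1 * (x + x2) by rewrite ex; ring.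
  apply: idealB => //; rewrite mulrC; case: (hM) => _ _; apply; exact: hx1.
case: (eqVneq x2 0) => [e0|nz]; first by rewrite ex e0 addr0.
have [a ha] := lead_ex hto nz.
have hsq := lead_M hto ha ha.
have [e0 [he0 hle]] : exists e0, G e0 /\ (e0 <= a + a)%MM.
  apply: (@mon_ideal_supp (fun g => exists m, G m /\ g = 'X_[m]) G (x2 * x2)).
  - by [].
  - by apply/e.
  - by case: hsq.
have hDa : Db a.
  apply: DbN; exists e0; split => //; apply/mnm_lepP => i.
  move/mnm_lepP: hle => /(_ i); rewrite mnmDE.
  have := hG _ he0 i; lia.
have := lead_coef_neq0 ha; rewrite /x2 raddf_sum /= big1_seq ?eqxx //.
move=> m /andP [hDm _]; rewrite mcoeffZ mcoeffX.
by case: (eqVneq m a) => [ema|]; [rewrite ema hDa in hDm|rewrite mulr0].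
Qed.

End G.



Section Fin.
Variables (n : nat) (F : fieldType) (le : rel 'X_{1..n}).
Hypothesis hto : term_order le.

Definition mon (A : {set 'I_n}) : 'X_{1..n} := [multinom (i \in A : nat) | i < n].

Definition key (P : {mpoly F[n]} -> Prop) : {set {set 'I_n}} :=
  [set A | if excluded_middle_informative (init_ideal le P 'X_[mon A]) then true else false].

Lemma keyP P A : A \in key P <-> init_ideal le P 'X_[mon A].
Proof. by rewrite inE; case: excluded_middle_informative. Qed.

Lemma key_sub (P P' : {mpoly F[n]} -> Prop) : sqfree_monomial_ideal (init_ideal le P) ->
  key P = key P' -> subI (init_ideal le P) (init_ideal le P').
Proof.
move=> [G [hG e]] hk x /e; apply: gen_ideal_min; first exact: init_ideal_ideal.
move=> g [m [hm ->]].
have em : m = mon [set i | m i != 0%N].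
  apply/mnmP => i; rewrite /mon mnmE inE.
  by have := hG _ hm i; case: (m i) => [|[|]].
have : [set i | m i != 0%N] \in key P.
  by apply/keyP; rewrite -em; apply/e; apply: gen_ideal_gen; exists m.
by rewrite hk => /keyP; rewrite -em.
Qed.

Lemma avoid_list (I Q : {mpoly F[n]} -> Prop) g (L : seq {set {set 'I_n}}) :
  is_prime Q ->
  (forall p, Min I p -> exists x, init_ideal le p (x * g) /\ ~ Q x) ->
  (forall p, Min I p -> sqfree_monomial_ideal (init_ideal le p)) ->
  exists u, ~ Q u /\ forall p, Min I p -> key p \in L -> init_ideal le p (u * g).
Proof.
move=> hQ hx hsq; elim: L => [|K L [u [hu hall]]].
  by exists 1; split; [case: hQ|].
case: (classic (exists p0, Min I p0 /\ key p0 = K)) => [[p0 [hp0 hk0]]|hno].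
  have [x0 [hx0 hxQ]] := hx p0 hp0.
  exists (x0 * u); split; first exact: prime_notM.
  move=> p hp; rewrite inE => /orP [/eqP hkp|hkL].
    have ek : key p0 = key p by rewrite hk0 hkp.
    have hh := key_sub (hsq p0 hp0) ek hx0.
    rewrite mulrAC mulrC; case: (init_ideal_ideal le p) => _ _; apply.
    exact: hh.
  by rewrite -mulrA; case: (init_ideal_ideal le p) => _ _; apply; apply: hall.
exists u; split => // p hp; rewrite inE => /orP [/eqP hkp|]; last exact: hall.
by case: hno; exists p.
Qed.

End Fin.

Theorem lemma3p17 (F : fieldType) (n : nat) (le : rel 'X_{1..n}) (t : nat)
  (I : {mpoly F[n]} -> Prop) :
  term_order le -> (0 < t)%N -> is_ideal I ->
  sqfree_monomial_ideal (init_ideal le I) ->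
  (* (a) *) (forall P, Min I P -> sqfree_monomial_ideal (init_ideal le P)) ->
  (* (b) *) eqI (symb_pow (init_ideal le I) t) (pow_ideal (init_ideal le I) t) ->
  (* (c) *) (forall P, Min I P ->
               eqI (init_ideal le (symb_pow P t)) (symb_pow (init_ideal le P) t)) ->
  (* (d) *) eqI (init_ideal le I)
               (fun x => forall P, Min I P -> init_ideal le P x) ->
  eqI (symb_pow I t) (pow_ideal I t).
Proof.
move=> hto ht hI hsqI ha hb hc hd.
have acc : @ACC_ideals {mpoly F[n]} := acc_mpoly hto.
have hrad : forall y, (forall Q, Min I Q -> Q y) -> I y.
  have hK : is_ideal (fun y => forall Q, Min I Q -> Q y).
    split.
    - by move=> Q [[[h0 _ _] _ _] _ _].
    - by move=> x y hx hy Q hQ; case: (hQ) => [[[_ hD _] _ _] _ _]; apply: hD;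
        [apply: hx|apply: hy].
    - by move=> r x hx Q hQ; case: (hQ) => [[[_ _ hM] _ _] _ _]; apply: hM; apply: hx.
  apply: (groebner_eq hto hI hK).
    by move=> x hx Q [_ hIQ _]; apply: hIQ.
  move=> f m hf hfm; apply: (init_mon hto hI).
  by apply/hd => Q hQ; apply: (init_lead (f := f)) => //; apply: hf.
have hass : forall p, Min I p -> Ass I p.
  by move=> p hp; apply: (min_ass acc hI hrad hp).
move=> x; split; last by apply: pow_sub_symb.
move: x; apply: (groebner_eq hto (pow_ideal_ideal I t) (symb_pow_ideal t hI)).
  exact: pow_sub_symb.
move=> f m hf hfm.
apply: (init_mon hto (pow_ideal_ideal I t)).
apply: (init_pow hto); apply/hb.
have h4a : forall p, Min I p -> symb_pow (init_ideal le p) t 'X_[m].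
  move=> p hp; apply/(hc p hp); apply: (init_lead (f := f)) => //.
  move=> Q hQ; have [hpP hIp _] := hp.
  have eQ := Ass_prime hpP hQ.
  apply: (loc_contr_eqI (P := p)); first by move=> z; split => /eQ.
  have h1 := hf p (hass p hp).
  have h2 := pow_ideal_mono (t := t) hIp.
  exact: (loc_contr_mono h2 h1).
move=> Q hQ; have [hQP [g eg]] := hQ.
have [p [hp hsub]] : exists p, Min I p /\ subI (colon (init_ideal le p) g) Q.
  apply: NNPP => hn.
  have hx : forall p, Min I p -> exists x, init_ideal le p (x * g) /\ ~ Q x.
    move=> p hp; apply: NNPP => hn2; apply: hn; exists p; split => // x hx.
    by apply: NNPP => hq; apply: hn2; exists x.
  have [u [hu hall]] := avoid_list (enum {set {set 'I_n}}) hQP hx ha.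
  apply: hu; apply/eg; rewrite /colon; apply/hd => p hp.
  by apply: hall => //; rewrite mem_enum.
have hAssp : Ass (init_ideal le p) Q.
  split => //; exists g => z; split => hz; last exact: hsub.
  by move/eg: hz; rewrite /colon => /hd; apply.
have [s [hs hsm]] := h4a p hp Q hAssp.
have hgQ : ~ Q g.
  move=> qg; have /eg := qg; rewrite /colon => /(sqfree_rad hto hsqI) hg.
  by case: hQP => _ h1 _; apply: h1; apply/eg; rewrite /colon mul1r.
have hscale : forall y, init_ideal le p y -> init_ideal le I (g * y).
  move=> y hy; have : Q y.
    by apply: hsub; rewrite /colon; apply: idealMr => //; apply: init_ideal_ideal.
  by move/eg; rewrite /colon mulrC.
exists (g ^+ t * s); split.
  by apply: prime_notM => //; apply: prime_notX.
by rewrite -mulrA; apply: pow_ideal_scale hscale hsm.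
Qed.
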